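(* Let $J_-,J_+\subset\mathbb Z$ be disjoint finite arithmetic progressions with the same common difference, $J=J_-\cup J_+$. For a generic twisted $J$-corrugated $n$-gon with corresponding operator $\mathcal D\in\mathrm{DO}_n(J)$, the Lax operator $\mathcal L(z):=\mathcal D_-(z)^{-1}\mathcal D_+(z)$ is a well-defined element of $\widetilde{\mathrm{GL}}_n/(\mathrm{Ad}\,\mathbb T\times\mathbb R^* )$, i.e. it does not depend, modulo conjugation by constant invertible diagonal matrices and the substitutions $z\mapsto tz$ ($t\in\mathbb R^*$), on the choice of $\mathcal D$ corresponding to the polygon nor on the representative of the projective equivalence class.
   Context: A scalar operator is a bi-infinite real sequence $a=(a_i)$ acting by $(aV)_i=a_iV_i$; $T$ is the left shift. An $n$-periodic difference operator is a finite sum $\sum_j a^{(j)}T^j$ with $n$-periodic coefficients; $\mathrm{DO}_n(J)$ consists of those of the form $\sum_{j\in J}a^{(j)}T^j$; for $\mathcal D=\sum_{j\in J}a^{(j)}T^j$ put $\mathcal D_\pm=\sum_{j\in J_\pm}a^{(j)}T^j$. $\mathcal D(z)$ is the matrix Laurent polynomial obtained by sending a scalar operator $a$ to $\mathrm{diag}(a_1,\dots,a_n)$ and $T$ to the $n\times n$ matrix with $1$'s at positions $(i,i+1)$ and $z$ at position $(n,1)$. $\widetilde{\mathrm{GL}}_n$ is the group of invertible matrix-valued rational functions of $z$. For $d=\max J-\min J-1$, a twisted $J$-corrugated $n$-gon is a sequence $v_i\in\mathbb{RP}^d$ with $v_{i+n}=M(v_i)$ ($M$ projective) such that for each $i$ the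 points $v_{i+j}$, $j\in J$, lie in a projective subspace of dimension $|J|-2$; $\mathcal D$ corresponds to it if $\mathcal DV=0$ for some lift $V_i\in\mathbb R^{d+1}$ of $v_i$. Such $\mathcal D$ is determined up to $\mathcal D\mapsto a\mathcal Db^{-1}$ with $a,b$ invertible $n$-quasiperiodic scalar operators with the same monodromy. *)

(* Defs.v *)
From HB Require Import structures.
From mathcomp Require Import all_boot all_order all_algebra.
Set Implicit Arguments. Unset Strict Implicit. Unset Printing Implicit Defensive.
Import Order.TTheory GRing.Theory Num.Theory.
Local Open Scope ring_scope.

Notation RatF R := {fraction {poly R}}.

Definition cstF (R : realFieldType) (c : R) : RatF R := @FracField.tofrac _ (c%:P).
Definition zF (R : realFieldType) : RatF R := @FracField.tofrac _ 'X.

Definition arith_prog (s k : int) (len : nat) : seq int :=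
  [seq s + k * (i%:Z) | i <- iota 0 len].

Definition periodic (R : realFieldType) (n : nat) (a : int -> R) : Prop :=
  forall i : int, a (i + n%:Z) = a i.
Definition quasiperiodic (R : realFieldType) (n : nat) (m : R) (a : int -> R) : Prop :=
  forall i : int, a (i + n%:Z) = m * a i.
Definition scalar_invertible (R : realFieldType) (a : int -> R) : Prop :=
  forall i : int, a i != 0.

(* A difference operator in DO_n(J) is given by its coefficient sequences
   c j (for j in J), each n-periodic:  D = sum_{j in J} (c j) T^j. *)
Definition DO_coeffs (R : realFieldType) (n : nat) (c : int -> int -> R) : Prop :=
  forall j, periodic n (c j).

Definition DOact (R : realFieldType) (J : seq int) (c : int -> int -> R)
  (V : int -> R) : int -> R :=
  fun i => \sum_(j <- J) c j i * V (i + j).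

(* The matrix of T: 1's at (i,i+1), z at (n,1) (1-indexed); here 0-indexed. *)
Definition Tmat (R : realFieldType) (n : nat) (z : RatF R) : 'M[RatF R]_n :=
  \matrix_(i < n, j < n)
    (if (j : nat) == (i : nat).+1 then 1
     else if ((i : nat) == n.-1) && ((j : nat) == 0%N) then z else 0).

Definition Tpow (R : realFieldType) (n : nat) (z : RatF R) (j : int) : 'M[RatF R]_n :=
  match j with
  | Posz k => (Tmat n z) ^+ k
  | Negz k => (invmx (Tmat n z)) ^+ k.+1
  end.

Definition scal_mat (R : realFieldType) (n : nat) (a : int -> R) : 'M[RatF R]_n :=
  diag_mx (\row_(i < n) cstF (a ((i : nat).+1)%:Z)).

Definition DOmat (R : realFieldType) (n : nat) (J : seq int) (c : int -> int -> R)
  (z : RatF R) : 'M[RatF R]_n :=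
  \sum_(j <- J) scal_mat n (c j) *m Tpow n z j.

Definition Lax (R : realFieldType) (n : nat) (Jm Jp : seq int) (c : int -> int -> R)
  (z : RatF R) : 'M[RatF R]_n :=
  invmx (DOmat n Jm c z) *m DOmat n Jp c z.

(* Main.v *)
Require Import Defs.
From HB Require Import structures.
From mathcomp Require Import all_boot all_order all_algebra.
From mathcomp Require Import ring zify.
Import Order.TTheory GRing.Theory Num.Theory.
Local Open Scope ring_scope.
Set Implicit Arguments. Unset Strict Implicit.

Section Q.
Local Open Scope quotient_scope.

Lemma frac_repr (R : idomainType) (x : {fraction R}) :
  x = FracField.tofrac (repr x).1 / FracField.tofrac (repr x).2.
Proof.
rewrite -[in LHS](reprK x). set r := repr x.
unlock FracField.tofrac => /=.
have -> : forall y : {fraction R}, y^-1 = FracField.inv y by [].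
have -> : forall y z : {fraction R}, y * z = FracField.mul y z by [].
rewrite -FracField.pi_inv -FracField.pi_mul. apply/eqmodP.
rewrite /= FracField.equivfE /FracField.mulf /FracField.invf /=.
rewrite !numden_Ratio ?oner_neq0 ?mul1r ?mulr1 ?denom_ratioP //.
by rewrite mulrC.
Qed.

Lemma repr_den_neq0 (R : idomainType) (x : {fraction R}) : (repr x).2 != 0.
Proof. exact: denom_ratioP. Qed.

Lemma fracB (F : fieldType) (a b c d : F) : b != 0 -> d != 0 ->
  a / b - c / d = (a * d - c * b) / (b * d).
Proof. move=> hb hd; field. by rewrite hb hd. Qed.
Lemma fracM (F : fieldType) (a b c d : F) : b != 0 -> d != 0 ->
  a / b * (c / d) = (a * c) / (b * d).
Proof. move=> hb hd; field. by rewrite hb hd. Qed.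

Notation tf := (@FracField.tofrac _).

Lemma frac_eqE (R : idomainType) (p q p0 q0 : R) : q != 0 -> q0 != 0 ->
  (tf p / tf q == tf p0 / tf q0) = (p * q0 == p0 * q).
Proof.
move=> hq hq0; rewrite eqr_div ?tofrac_eq0 // -!tofracM tofrac_eq //.
Qed.

Section Subst.
Variable R : realFieldType.
Variable t : R.
Hypothesis ht : t != 0.

Definition sp (p : {poly R}) := p \Po (t *: 'X).

Lemma sp_neq0 p : p != 0 -> sp p != 0.
Proof.
move=> hp; rewrite -size_poly_eq0 /sp size_comp_poly2 ?size_poly_eq0 //.
by rewrite size_scale // size_polyX.
Qed.

Definition phi (x : {fraction {poly R}}) : {fraction {poly R}} :=
  tf (sp (repr x).1) / tf (sp (repr x).2).

Lemma phiE p q : q != 0 -> phi (tf p / tf q) = tf (sp p) / tf (sp q).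
Proof.
move=> hq. rewrite /phi. set x := tf p / tf q.
have hx := frac_repr x.
have h2 := repr_den_neq0 x.
apply/eqP; rewrite frac_eqE ?sp_neq0 //.
have : x == x by []. rewrite {1}hx /x frac_eqE // => /eqP e.
by rewrite /sp -!comp_polyM e.
Qed.

Lemma sp1 : sp 1 = 1. Proof. by rewrite /sp comp_polyC. Qed.
Lemma spB p q : sp (p - q) = sp p - sp q. Proof. by rewrite /sp comp_polyB. Qed.
Lemma spM p q : sp (p * q) = sp p * sp q. Proof. by rewrite /sp comp_polyM. Qed.

Lemma phi_zmod : GRing.zmod_morphism phi.
Proof.
move=> x y.
rewrite (frac_repr x) (frac_repr y).
set p := (repr x).1; set q := (repr x).2; set p' := (repr y).1; set q' := (repr y).2.
have hq : q != 0 := repr_den_neq0 x. have hq' : q' != 0 := repr_den_neq0 y.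
have hqq : q * q' != 0 by rewrite mulf_neq0.
have -> : tf p / tf q - tf p' / tf q' = tf (p * q' - p' * q) / tf (q * q').
  by rewrite tofracB !tofracM fracB // tofrac_eq0.
rewrite !phiE // spB !spM tofracB !tofracM fracB // tofrac_eq0 sp_neq0 //.
Qed.

Lemma phi_monoid : GRing.monoid_morphism phi.
Proof.
split.
  have -> : (1 : {fraction {poly R}}) = tf 1 / tf 1 by rewrite tofrac1 divr1.
  by rewrite phiE ?oner_neq0 // sp1 tofrac1 divr1.
move=> x y.
rewrite (frac_repr x) (frac_repr y).
set p := (repr x).1; set q := (repr x).2; set p' := (repr y).1; set q' := (repr y).2.
have hq : q != 0 := repr_den_neq0 x. have hq' : q' != 0 := repr_den_neq0 y.
have hqq : q * q' != 0 by rewrite mulf_neq0.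
have -> : tf p / tf q * (tf p' / tf q') = tf (p * p') / tf (q * q').
  by rewrite !tofracM fracM // tofrac_eq0.
rewrite !phiE // !spM !tofracM fracM // tofrac_eq0 sp_neq0 //.
Qed.


Lemma phiC (c : R) : phi (tf c%:P) = tf c%:P.
Proof.
have -> : tf c%:P = tf c%:P / tf 1 by rewrite tofrac1 divr1.
by rewrite phiE ?oner_neq0 // sp1 /sp comp_polyC tofrac1 !divr1.
Qed.

Lemma phiX : phi (tf ('X : {poly R})) = tf t%:P * tf 'X.
Proof.
have -> : tf ('X : {poly R}) = tf 'X / tf 1 by rewrite tofrac1 divr1.
rewrite phiE ?oner_neq0 // sp1 /sp comp_polyX tofrac1 !divr1.
by rewrite -tofracM mul_polyC.
Qed.
End Subst.
End Q.

Definition wT (R : realFieldType) (n : nat) (z : RatF R) (i : 'I_n) : RatF R :=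
  if (i : nat) == n.-1 then z else 1.

Lemma ordS_val n (i : 'I_n) : (ordS i : nat) = if (i : nat) == n.-1 then 0%N else i.+1.
Proof.
rewrite /ordS /=. have hi := ltn_ord i.
case: eqP => h.
  by rewrite h prednK ?modnn //; apply: leq_ltn_trans hi.
by rewrite modn_small //; move: hi h; case: n i => //= n i; lia.
Qed.

Lemma Tmat_E (R : realFieldType) n (z : RatF R) (i j : 'I_n) :
  Tmat n z i j = if j == ordS i then wT z i else 0.
Proof.
rewrite /Tmat mxE /wT.
have -> : (j == ordS i) = ((j:nat) == (if (i : nat) == n.-1 then 0%N else i.+1)) by rewrite -ordS_val.
have hi := ltn_ord i; have hj := ltn_ord j.
case: (altP ((j:nat) =P i.+1)) => h1.
  have h3 : (i:nat) != n.-1 by apply/eqP; move: hi h1 hj; lia.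
  by rewrite h1 (negPf h3) eqxx.
by case: ((i:nat) == n.-1) => //=; rewrite (negPf h1).
Qed.

Definition Sinv (R : realFieldType) n (z : RatF R) : 'M[RatF R]_n :=
  \matrix_(j, l) (if j == ordS l then (wT z l)^-1 else 0).

Lemma wT_neq0 (R : realFieldType) n (z : RatF R) (i : 'I_n) : z != 0 -> wT z i != 0.
Proof. move=> hz; rewrite /wT; case: ifP => _; [exact: hz | exact: oner_neq0]. Qed.

Lemma Tmat_Sinv (R : realFieldType) n (z : RatF R) : z != 0 ->
  Tmat n z *m Sinv n z = 1%:M.
Proof.
move=> hz; apply/matrixP => i l. rewrite !mxE (bigD1 (ordS i)) // /= big1.
  rewrite addr0 Tmat_E eqxx mxE (inj_eq (@ordS_inj n)) eq_sym.
  case: eqP => [->|_]; last by rewrite mulr0.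
  by rewrite divff ?wT_neq0.
by move=> j hj; rewrite Tmat_E (negPf hj) mul0r.
Qed.

Lemma Tmat_unit (R : realFieldType) n (z : RatF R) : z != 0 -> Tmat n z \in unitmx.
Proof. move=> hz; have [h _] := mulmx1_unit (Tmat_Sinv n hz); exact: h. Qed.

Lemma cstFM (R : realFieldType) (x y : R) : cstF (x * y) = cstF x * cstF y.
Proof. by rewrite /cstF polyCM tofracM. Qed.
Lemma cstF1 (R : realFieldType) : cstF (1 : R) = 1.
Proof. by rewrite /cstF polyC1 tofrac1. Qed.

Lemma scal_mat_ext (R : realFieldType) n (f g : int -> R) :
  (forall i, f i = g i) -> scal_mat n f = scal_mat n g.
Proof. move=> h; rewrite /scal_mat; congr diag_mx; apply/rowP => i; rewrite !mxE h. reflexivity. Qed.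

Lemma K1 (R : realFieldType) n (b : int -> R) (m : R) (z : RatF R) :
  (0 < n)%N -> m != 0 -> quasiperiodic n m b ->
  Tmat n z *m scal_mat n b = scal_mat n (fun i => b (i + 1)) *m Tmat n (cstF m^-1 * z).
Proof.
move=> hn hm hb; apply/matrixP => i j; rewrite /scal_mat mul_mx_diag mul_diag_mx [LHS]mxE [RHS]mxE !Tmat_E !mxE.
case: eqP => [->|_]; last by rewrite mul0r mulr0.
rewrite ordS_val /wT; case: ifP => /eqP hi.
  have -> : ((i : nat).+1%:Z + 1) = 1 + n%:Z by rewrite hi prednK // addrC.
  rewrite hb mulrC mulrA -cstFM mulrAC divff // mul1r. reflexivity.
have -> : ((i : nat).+1%:Z + 1) = (i.+2)%:Z by rewrite -PoszD addn1.
rewrite mul1r mulr1. reflexivity.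
Qed.

Lemma qp_shift (R : realFieldType) n (m : R) (f : int -> R) (s : int) :
  quasiperiodic n m f -> quasiperiodic n m (fun i => f (i + s)).
Proof. by move=> hf i; rewrite -hf addrAC. Qed.

Lemma cstF_neq0 (R : realFieldType) (x : R) : x != 0 -> cstF x != 0.
Proof. by move=> hx; rewrite /cstF tofrac_eq0 polyC_eq0. Qed.

Lemma z'_neq0 (R : realFieldType) (m : R) (z : RatF R) : m != 0 -> z != 0 -> cstF m^-1 * z != 0.
Proof.
move=> hm hz; apply: mulf_neq0; last exact: hz.
apply: cstF_neq0; rewrite invr_eq0; exact: hm.
Qed.

Lemma K1inv (R : realFieldType) n (f : int -> R) (m : R) (z : RatF R) :
  (0 < n)%N -> m != 0 -> z != 0 -> quasiperiodic n m f ->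
  invmx (Tmat n z) *m scal_mat n f
  = scal_mat n (fun i => f (i - 1)) *m invmx (Tmat n (cstF m^-1 * z)).
Proof.
move=> hn hm hz hf.
have hz' := z'_neq0 hm hz.
have e : Tmat n z *m scal_mat n (fun i => f (i - 1)) = scal_mat n f *m Tmat n (cstF m^-1 * z).
  rewrite (K1 z hn hm (qp_shift (-1) hf)); congr (_ *m _).
  by apply: scal_mat_ext => i /=; rewrite addrK.
have e' : scal_mat n f = Tmat n z *m scal_mat n (fun i => f (i - 1)) *m invmx (Tmat n (cstF m^-1 * z)).
  rewrite e (mulmxK (Tmat_unit n hz')). reflexivity.
rewrite [in LHS]e' mulmxA (mulKmx (Tmat_unit n hz)). reflexivity.
Qed.
Lemma Tpow_N0 (R : realFieldType) n (z : RatF R) : Tpow n z (Negz 0) = invmx (Tmat n z).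
Proof. exact: expr1. Qed.
Lemma Tpow_NS (R : realFieldType) n (z : RatF R) k :
  Tpow n z (Negz k.+1) = invmx (Tmat n z) *m Tpow n z (Negz k).
Proof. exact: exprS. Qed.

Lemma Kpow (R : realFieldType) n (m : R) (z : RatF R) :
  (0 < n)%N -> m != 0 -> z != 0 -> forall (j : int) (f : int -> R), quasiperiodic n m f ->
  Tpow n z j *m scal_mat n f
  = scal_mat n (fun i => f (i + j)) *m Tpow n (cstF m^-1 * z) j.
Proof.
move=> hn hm hz [k|k].
  elim: k => [|k IH] f hf.
    rewrite /Tpow !expr0 mul1mx mulmx1; apply: scal_mat_ext => i; rewrite addr0; reflexivity.
  rewrite /Tpow.
  have e1 : Tmat n z ^+ k.+1 = Tmat n z *m Tmat n z ^+ k := exprS _ _.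
  have e2 : Tmat n (cstF m^-1 * z) ^+ k.+1 = Tmat n (cstF m^-1 * z) *m Tmat n (cstF m^-1 * z) ^+ k := exprS _ _.
  rewrite e1 e2 -mulmxA.
  have := IH f hf; rewrite /Tpow => ->.
  rewrite mulmxA (K1 z hn hm (qp_shift k hf)) -mulmxA.
  congr (_ *m _); apply: scal_mat_ext => i.
  have -> : (k.+1)%:Z = k%:Z + 1 by rewrite -PoszD addn1.
  rewrite [k%:Z + 1]addrC addrA. reflexivity.
elim: k => [|k IH] f hf.
  rewrite !Tpow_N0 (K1inv hn hm hz hf).
  apply: (congr2 mulmx); last reflexivity.
  apply: scal_mat_ext => i; reflexivity.
rewrite [in LHS]Tpow_NS. rewrite -mulmxA. rewrite (IH f hf). rewrite mulmxA. rewrite (K1inv hn hm hz (qp_shift (Negz k) hf)). rewrite -mulmxA. rewrite [in RHS]Tpow_NS. apply: (congr2 mulmx); last reflexivity.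
apply: scal_mat_ext => i. congr (f _). rewrite !NegzE. lia.
Qed.

Definition phiH (R : realFieldType) (t : R) (ht : t != 0) := phi t.
HB.instance Definition _ (R : realFieldType) (t : R) (ht : t != 0) :=
  GRing.isZmodMorphism.Build _ _ (phiH ht) (phi_zmod ht).
HB.instance Definition _ (R : realFieldType) (t : R) (ht : t != 0) :=
  GRing.isMonoidMorphism.Build _ _ (phiH ht) (phi_monoid ht).

Lemma phiH_cstF (R : realFieldType) (t : R) (ht : t != 0) c : phiH ht (cstF c) = cstF c.
Proof. exact: phiC. Qed.
Lemma phiH_zF (R : realFieldType) (t : R) (ht : t != 0) : phiH ht (zF R) = cstF t * zF R.
Proof. exact: phiX. Qed.

Lemma map_Tmat (R : realFieldType) (t : R) (ht : t != 0) n :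
  map_mx (phiH ht) (Tmat n (zF R)) = Tmat n (cstF t * zF R).
Proof.
apply/matrixP => i j; rewrite !mxE.
case: ifP => _; first exact: rmorph1.
case: ifP => _; first exact: phiH_zF.
exact: rmorph0.
Qed.

Lemma map_scal (R : realFieldType) (t : R) (ht : t != 0) n f :
  map_mx (phiH ht) (scal_mat n f) = scal_mat n f.
Proof.
rewrite /scal_mat map_diag_mx; congr diag_mx; apply/rowP => i; rewrite !mxE.
exact: phiH_cstF.
Qed.

Lemma Tpow_0 (R : realFieldType) n (z : RatF R) : Tpow n z 0 = 1%:M.
Proof. exact: expr0. Qed.
Lemma Tpow_S (R : realFieldType) n (z : RatF R) k :
  Tpow n z (Posz k.+1) = Tmat n z *m Tpow n z k.
Proof. exact: exprS. Qed.

Lemma map_Tpow (R : realFieldType) (t : R) (ht : t != 0) n j :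
  map_mx (phiH ht) (Tpow n (zF R) j) = Tpow n (cstF t * zF R) j.
Proof.
case: j => k.
  elim: k => [|k IH].
    rewrite !Tpow_0; exact: map_mx1.
  rewrite !Tpow_S map_mxM IH map_Tmat. reflexivity.
elim: k => [|k IH].
  rewrite !Tpow_N0 map_invmx map_Tmat. reflexivity.
rewrite !Tpow_NS map_mxM IH map_invmx map_Tmat. reflexivity.
Qed.

Lemma map_DOmat (R : realFieldType) (t : R) (ht : t != 0) n J c :
  map_mx (phiH ht) (DOmat n J c (zF R)) = DOmat n J c (cstF t * zF R).
Proof.
rewrite /DOmat map_mx_sum; apply: eq_bigr => j _.
rewrite map_mxM map_scal map_Tpow. reflexivity.
Qed.

Lemma scal_matM (R : realFieldType) n (f g : int -> R) :
  scal_mat n f *m scal_mat n g = scal_mat n (fun i => f i * g i).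
Proof.
rewrite /scal_mat mul_diag_mx; apply/matrixP => i j; rewrite !mxE cstFM mulrnAr.
reflexivity.
Qed.

Lemma scal_mat1 (R : realFieldType) n : scal_mat n (fun _ => (1 : R)) = 1%:M.
Proof.
rewrite /scal_mat -diag_const_mx; congr diag_mx; apply/rowP => i; rewrite !mxE.
exact: cstF1.
Qed.

Lemma scal_matV (R : realFieldType) n (f : int -> R) : (forall i, f i != 0) ->
  scal_mat n f *m scal_mat n (fun i => (f i)^-1) = 1%:M.
Proof.
move=> hf; rewrite scal_matM -(scal_mat1 R n); apply: scal_mat_ext => i.
exact: divff.
Qed.

Lemma scal_Vmat (R : realFieldType) n (f : int -> R) : (forall i, f i != 0) ->
  scal_mat n (fun i => (f i)^-1) *m scal_mat n f = 1%:M.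
Proof.
move=> hf; rewrite scal_matM -(scal_mat1 R n); apply: scal_mat_ext => i.
exact: mulVf.
Qed.

Lemma invmx_eq (R : fieldType) n (A B : 'M[R]_n) : A *m B = 1%:M -> invmx A = B.
Proof.
move=> h; have [uA _] := mulmx1_unit h.
have := congr1 (mulmx (invmx A)) h; rewrite mulmxA (mulVmx uA) mul1mx mulmx1.
move=> ->; reflexivity.
Qed.

Lemma invmxM3 (R : fieldType) n (A X B : 'M[R]_n) :
  A \in unitmx -> X \in unitmx -> B \in unitmx ->
  invmx (A *m X *m B) = invmx B *m invmx X *m invmx A.
Proof.
move=> uA uX uB; apply: invmx_eq.
rewrite -!mulmxA (mulmxA B) (mulmxV uB) mul1mx (mulmxA X) (mulmxV uX) mul1mx.
exact: mulmxV.
Qed.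

Lemma zF_neq0 (R : realFieldType) : zF R != 0.
Proof. rewrite /zF tofrac_eq0 polyX_eq0. reflexivity. Qed.


Lemma K4 (R : realFieldType) n (m : R) (z : RatF R) (b : int -> R) :
  (0 < n)%N -> m != 0 -> z != 0 -> quasiperiodic n m b -> (forall i, b i != 0) ->
  forall j : int,
  scal_mat n (fun i => (b (i + j))^-1) *m Tpow n z j
  = Tpow n (cstF m^-1 * z) j *m scal_mat n (fun i => (b i)^-1).
Proof.
move=> hn hm hz hbq hb j.
have e := Kpow hn hm hz j hbq.
set Bj := scal_mat n (fun i => (b (i + j))^-1).
set Bi := scal_mat n (fun i => (b i)^-1).
set B := scal_mat n b.
set B' := scal_mat n (fun i => b (i + j)).
set T := Tpow n z j. set T' := Tpow n (cstF m^-1 * z) j.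
have h1 : B *m Bi = 1%:M := scal_matV n hb.
have h2 : Bj *m B' = 1%:M := scal_Vmat n (f := fun i => b (i + j)) (fun i => hb _).
have h3 := congr1 (fun X => Bj *m X *m Bi) e.
simpl in h3.
rewrite -(mulmxA Bj (T *m B) Bi) -(mulmxA T B Bi) h1 mulmx1 (mulmxA Bj B' T') h2 mul1mx in h3.
exact: h3.
Qed.

Lemma DO_rel (R : realFieldType) n (m : R) (z : RatF R) (a b : int -> R) (c c' : int -> int -> R) (J : seq int) :
  (0 < n)%N -> m != 0 -> z != 0 -> quasiperiodic n m b -> (forall i, b i != 0) ->
  (forall j, j \in J -> forall i, c' j i = a i * c j i / b (i + j)) ->
  DOmat n J c' z = scal_mat n a *m DOmat n J c (cstF m^-1 * z) *m scal_mat n (fun i => (b i)^-1).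
Proof.
move=> hn hm hz hbq hb hc.
rewrite /DOmat mulmx_sumr mulmx_suml; apply: eq_big_seq => j hj.
have -> : scal_mat n (c' j) = scal_mat n a *m scal_mat n (c j) *m scal_mat n (fun i => (b (i + j))^-1).
  rewrite !scal_matM; apply: scal_mat_ext => i; rewrite (hc j hj). reflexivity.
have e := K4 hn hm hz hbq hb j.
set A := scal_mat n a. set C := scal_mat n (c j). set Bj := scal_mat n (fun i => (b (i + j))^-1).
set Bi := scal_mat n (fun i => (b i)^-1).
set T := Tpow n z j. set T' := Tpow n (cstF m^-1 * z) j.
rewrite -(mulmxA (A *m C) Bj T) e (mulmxA (A *m C) T' Bi) (mulmxA A C T'). reflexivity.
Qed.

Lemma lax_conj (F : fieldType) n (A X Y B Bi : 'M[F]_n) :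
  A \in unitmx -> X \in unitmx -> B *m Bi = 1%:M -> Bi *m B = 1%:M ->
  invmx (A *m X *m Bi) *m (A *m Y *m Bi) = B *m (invmx X *m Y) *m invmx B.
Proof.
move=> uA uX h1 h2.
have uBi : Bi \in unitmx by case: (mulmx1_unit h2).
rewrite invmxM3 // (invmx_eq h2) (invmx_eq h1).
rewrite -!mulmxA; congr (_ *m _); rewrite !mulmxA (mulmxKV uA). reflexivity.
Qed.

Lemma arith_prog_uniq (s k : int) (l : nat) : k != 0 -> uniq (arith_prog s k l).
Proof.
move=> hk; rewrite /arith_prog map_inj_uniq ?iota_uniq // => x y /addrI /(mulfI hk).
by case.
Qed.

Lemma coef_rel (R : realFieldType) (J : seq int) (c c' : int -> int -> R) (a b : int -> R) :
  uniq J -> (forall i, b i != 0) ->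
  (forall (V : int -> R) (i : int),
     DOact J c' V i = a i * DOact J c (fun l => V l / b l) i) ->
  forall j, j \in J -> forall i, c' j i = a i * c j i / b (i + j).
Proof.
move=> hu hb hD j hj i.
pose V := fun l => if l == i + j then b l else 0.
have := hD V i; rewrite /DOact !(bigD1_seq j hj hu) /= big1 ?addr0; last first.
  move=> j' hj'; rewrite /V; case: eqP => [/addrI e|_]; last by rewrite mulr0.
  by rewrite e eqxx in hj'.
rewrite big1 ?addr0; last first.
  move=> j' hj'; rewrite /V; case: eqP => [/addrI e|_]; last by rewrite mul0r mulr0.
  by rewrite e eqxx in hj'.
rewrite /V eqxx divff // mulr1 => e.
by rewrite -e mulfK.
Qed.

Unset Implicit Arguments.

Theorem mainTheorem7 (R : realFieldType) (n : nat) (hn : (0 < n)%N)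
  (sm sp k : int) (lm lp : nat) (hk : 0 < k)
  (hdisj : all (fun j => j \notin arith_prog sp k lp) (arith_prog sm k lm))
  (c c' : int -> int -> R)
  (hc : DO_coeffs n c) (hc' : DO_coeffs n c')
  (a b : int -> R) (m : R)
  (ha : scalar_invertible a) (hb : scalar_invertible b)
  (haq : quasiperiodic n m a) (hbq : quasiperiodic n m b)
  (hD' : forall (V : int -> R) (i : int),
     DOact (arith_prog sm k lm ++ arith_prog sp k lp) c' V i
     = a i * DOact (arith_prog sm k lm ++ arith_prog sp k lp) c (fun l => V l / b l) i)
  (hgen : DOmat n (arith_prog sm k lm) c (zF R) \in unitmx) :
  DOmat n (arith_prog sm k lm) c' (zF R) \in unitmx /\
  exists (d : 'rV[R]_n) (t : R),
    (forall i, d 0 i != 0) /\ t != 0 /\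
    Lax n (arith_prog sm k lm) (arith_prog sp k lp) c' (zF R)
    = diag_mx (map_mx (@cstF R) d)
        *m Lax n (arith_prog sm k lm) (arith_prog sp k lp) c (cstF t * zF R)
        *m invmx (diag_mx (map_mx (@cstF R) d)).
Proof.
have hm : m != 0.
  apply/eqP => hm0; have := haq 0; rewrite hm0 mul0r => h0.
  by have := ha (0 + n%:Z); rewrite h0 eqxx.
have hk0 : k != 0 by rewrite gt_eqF.
set Jm := arith_prog sm k lm. set Jp := arith_prog sp k lp.
have hu : uniq (Jm ++ Jp).
  rewrite cat_uniq !arith_prog_uniq //= andbT.
  apply/hasPn => j hjp; apply/negP => hjm.
  by have := allP hdisj j hjm; rewrite hjp.
have hrel := coef_rel hu hb hD'.
have hrelm : forall j, j \in Jm -> forall i, c' j i = a i * c j i / b (i + j).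
  by move=> j hj; apply: hrel; rewrite mem_cat hj.
have hrelp : forall j, j \in Jp -> forall i, c' j i = a i * c j i / b (i + j).
  by move=> j hj; apply: hrel; rewrite mem_cat hj orbT.
have hz := zF_neq0 R.
have eDm := DO_rel hn hm hz hbq hb hrelm.
have eDp := DO_rel hn hm hz hbq hb hrelp.
have ht : m^-1 != 0 by rewrite invr_eq0.
have uDm : DOmat n Jm c (cstF m^-1 * zF R) \in unitmx.
  rewrite -(map_DOmat ht) (map_unitmx (phiH ht)); exact: hgen.
have hA := scal_matV n ha.
have [uA _] := mulmx1_unit hA.
have hB1 := scal_matV n hb.
have hB2 := scal_Vmat n hb.
have [uBi _] := mulmx1_unit hB2.
split.
  rewrite eDm !unitmx_mul uA uDm uBi. reflexivity.
exists (\row_(i < n) b ((i : nat).+1%:Z)), m^-1.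
split; first by move=> i; rewrite mxE; exact: hb.
split; first exact: ht.
have eD : diag_mx (map_mx (@cstF R) (\row_(i < n) b ((i : nat).+1%:Z))) = scal_mat n b.
  rewrite /scal_mat; congr diag_mx; apply/rowP => i; rewrite !mxE. reflexivity.
rewrite eD /Lax.
exact: (eq_trans (congr2 (fun X Y => invmx X *m Y) eDm eDp) (lax_conj _ uA uDm hB1 hB2)).
Qed.
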